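(* Let $\Lambda$ be an Artin algebra and $0\to A\xrightarrow{g}B\xrightarrow{f}C\to0$ a non-split exact sequence in $\mathrm{mod}\,\Lambda$ with $B$ projective and injective. Then the following are equivalent: (1) $A$ is indecomposable and $g$ is left minimal; (2) $C$ is indecomposable and $f$ is right minimal.
   Context: $\mathrm{mod}\,\Lambda$ is the category of finitely generated left $\Lambda$-modules. A morphism $g:A\to B$ is left minimal if every endomorphism $h:B\to B$ with $hg=g$ is an automorphism; dually, $f:B\to C$ is right minimal if every endomorphism $h:B\to B$ with $fh=f$ is an automorphism. *)

(* Defs.v *)
From HB Require Import structures.
From mathcomp Require Import all_boot all_order all_algebra.
Set Implicit Arguments. Unset Strict Implicit. Unset Printing Implicit Defensive.
Import GRing.Theory.
Local Open Scope ring_scope.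

Definition is_ideal (R : comPzRingType) (I : R -> Prop) : Prop :=
  I 0 /\ (forall x y, I x -> I y -> I (x + y)) /\ (forall a x, I x -> I (a * x)).

Definition artinian_ring (R : comPzRingType) : Prop :=
  forall I : nat -> (R -> Prop),
    (forall n, is_ideal (I n)) ->
    (forall n x, I n.+1 x -> I n x) ->
    exists N, forall n, (N <= n)%N -> forall x, I n x <-> I N x.

Definition artin_algebra (L : pzRingType) : Prop :=
  exists (R : comPzRingType) (phi : {rmorphism R -> L}),
    artinian_ring R /\
    (forall r x, phi r * x = x * phi r) /\
    exists n (s : 'I_n -> L), forall x : L,
      exists c : 'I_n -> R, x = \sum_(i < n) phi (c i) * s i.

Definition fin_gen (L : pzRingType) (M : lmodType L) : Prop :=
  exists n (s : 'I_n -> M), forall x : M,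
    exists c : 'I_n -> L, x = \sum_(i < n) c i *: s i.

Definition projective_mod (L : pzRingType) (P : lmodType L) : Prop :=
  forall (M N : lmodType L), fin_gen M -> fin_gen N ->
  forall (p : {linear M -> N}) (h : {linear P -> N}),
    (forall y, exists x, p x = y) -> exists h' : {linear P -> M}, forall x, p (h' x) = h x.

Definition injective_mod (L : pzRingType) (I : lmodType L) : Prop :=
  forall (M N : lmodType L), fin_gen M -> fin_gen N ->
  forall (i : {linear M -> N}) (h : {linear M -> I}),
    injective i -> exists h' : {linear N -> I}, forall x, h' (i x) = h x.

Definition submodule (L : pzRingType) (M : lmodType L) (U : M -> Prop) : Prop :=
  U 0 /\ forall (a : L) x y, U x -> U y -> U (a *: x + y).

Definition indecomposable (L : pzRingType) (M : lmodType L) : Prop :=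
  (exists x : M, x != 0) /\
  forall U V : M -> Prop, submodule U -> submodule V ->
    (forall x, U x -> V x -> x = 0) ->
    (forall x, exists u v, U u /\ V v /\ x = u + v) ->
    (forall x, U x -> x = 0) \/ (forall x, V x -> x = 0).

Definition left_minimal (L : pzRingType) (A B : lmodType L) (g : {linear A -> B}) : Prop :=
  forall h : {linear B -> B}, (forall x, h (g x) = g x) -> bijective h.

Definition right_minimal (L : pzRingType) (B C : lmodType L) (f : {linear B -> C}) : Prop :=
  forall h : {linear B -> B}, (forall x, f (h x) = f x) -> bijective h.

Definition short_exact (L : pzRingType) (A B C : lmodType L)
  (g : {linear A -> B}) (f : {linear B -> C}) : Prop :=
  injective g /\ (forall z, exists y, f y = z) /\
  (forall y, f y = 0 <-> exists x, g x = y).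

Definition splits (L : pzRingType) (A B C : lmodType L)
  (g : {linear A -> B}) (f : {linear B -> C}) : Prop :=
  exists r : {linear B -> A}, forall x, r (g x) = x.

(* Main.v *)
Require Import Defs.
From HB Require Import structures.
From mathcomp Require Import all_boot all_order all_algebra.
From Stdlib Require Import ClassicalEpsilon Classical.
Set Implicit Arguments. Unset Strict Implicit. Unset Printing Implicit Defensive.
Import GRing.Theory.
Local Open Scope ring_scope.

Definition mk_lin (L : pzRingType) (M N : lmodType L) (f : M -> N)
  (H : forall a x y, f (a *: x + y) = a *: f x + f y) : {linear M -> N} :=
  HB.pack f (GRing.isLinear.Build L M N _ f H).
Lemma mk_linE (L : pzRingType) (M N : lmodType L) f H x : @mk_lin L M N f H x = f x.
Proof. by []. Qed.

Section Span.
Variables (L : pzRingType) (R : comPzRingType) (phi : {rmorphism R -> L}) (M : lmodType L).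

Definition rspan (s : seq M) (x : M) :=
  exists c : nat -> R, x = \sum_(i < size s) phi (c i) *: s`_i.

Lemma rspan0 s : rspan s 0.
Proof. exists (fun _ => 0); rewrite big1 // => i _; by rewrite rmorph0 scale0r. Qed.

Lemma rspanP s r x y : rspan s x -> rspan s y -> rspan s (phi r *: x + y).
Proof.
move=> [c ->] [d ->]; exists (fun i => r * c i + d i).
rewrite scaler_sumr -big_split /=; apply: eq_bigr => i _.
by rewrite rmorphD rmorphM scalerDl scalerA.
Qed.

Lemma rspanD s x y : rspan s x -> rspan s y -> rspan s (x + y).
Proof. by move=> hx hy; have := rspanP 1 hx hy; rewrite rmorph1 scale1r. Qed.
Lemma rspanZ s r x : rspan s x -> rspan s (phi r *: x).
Proof. by move=> hx; have := rspanP r hx (rspan0 s); rewrite addr0. Qed.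
Lemma rspanN s x : rspan s x -> rspan s (- x).
Proof. by move=> hx; have := rspanZ (-1) hx; rewrite rmorphN1 scaleN1r. Qed.
Lemma rspanB s x y : rspan s x -> rspan s y -> rspan s (x - y).
Proof. by move=> hx hy; apply: rspanD => //; apply: rspanN. Qed.

Lemma rspan_mem s i : (i < size s)%N -> rspan s s`_i.
Proof.
move=> hi; exists (fun j => if j == i then 1 else 0).
rewrite (bigD1 (Ordinal hi)) //= eqxx rmorph1 scale1r big1 ?addr0 // => j hj.
have -> : (nat_of_ord j == i) = false.
  by apply/negbTE; move: hj; apply: contra => /eqP h; apply/eqP/val_inj.
by rewrite rmorph0 scale0r.
Qed.

Lemma rspan_cons a s x :
  rspan (a :: s) x <-> exists r y, rspan s y /\ x = phi r *: a + y.
Proof.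
split.
  move=> [c ->]; rewrite big_ord_recl /=; exists (c 0%N).
  by exists (\sum_(i < size s) phi (c (bump 0 i)) *: s`_i); split => //; exists (fun i => c i.+1).
move=> [r [y [[c ->] ->]]]; exists (fun i => if i is j.+1 then c j else r).
by rewrite big_ord_recl.
Qed.

Definition Rsub (U : M -> Prop) := U 0 /\ forall r x y, U x -> U y -> U (phi r *: x + y).

Lemma RsubD U x y : Rsub U -> U x -> U y -> U (x + y).
Proof. by move=> [_ h] hx hy; have := h 1 _ _ hx hy; rewrite rmorph1 scale1r. Qed.
Lemma RsubZ U r x : Rsub U -> U x -> U (phi r *: x).
Proof. by move=> [h0 h] hx; have := h r _ _ hx h0; rewrite addr0. Qed.
Lemma RsubB U x y : Rsub U -> U x -> U y -> U (x - y).
Proof.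
move=> hU hx hy; apply: RsubD => //; have := RsubZ (-1) hU hy.
by rewrite rmorphN1 scaleN1r.
Qed.

Lemma chain_le (U : nat -> M -> Prop) : (forall n x, U n.+1 x -> U n x) ->
  forall m n x, (m <= n)%N -> U n x -> U m x.
Proof.
move=> hU m n x /subnK <-; elim: (n - m)%N => [|k IH] //= h.
by apply: IH; apply: hU; rewrite addSn in h.
Qed.

Lemma dcc_span : artinian_ring R -> forall s (U : nat -> M -> Prop),
  (forall n, Rsub (U n)) -> (forall n x, U n.+1 x -> U n x) ->
  (forall n x, U n x -> rspan s x) ->
  exists N, forall n, (N <= n)%N -> forall x, U n x <-> U N x.
Proof.
move=> art; elim => [|a s IH] U hsub hdec hsp.
  exists 0%N => n _ x; split; first by apply: chain_le.
  move=> h0; have [c ->] := hsp _ _ h0; rewrite big_ord0; exact: (hsub n).1.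
pose I n r := exists y, rspan s y /\ U n (phi r *: a + y).
have hI : forall n, is_ideal (I n).
  move=> n; split; [|split].
  - by exists 0; split; [apply: rspan0 | rewrite rmorph0 scale0r addr0; apply: (hsub n).1].
  - move=> r1 r2 [y1 [h1 u1]] [y2 [h2 u2]]; exists (y1 + y2); split; first exact: rspanD.
    have := RsubD (hsub n) u1 u2.
    by rewrite rmorphD scalerDl addrACA.
  - move=> b r [y [h1 u1]]; exists (phi b *: y); split; first exact: rspanZ.
    have := RsubZ b (hsub n) u1.
    by rewrite scalerDr rmorphM scalerA.
have hId : forall n r, I n.+1 r -> I n r.
  by move=> n r [y [h1 h2]]; exists y; split => //; apply: hdec.
have [N1 hN1] := art I hI hId.
pose V n x := U n x /\ rspan s x.
have hV : forall n, Rsub (V n).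
  move=> n; split; first by split; [apply: (hsub n).1 | apply: rspan0].
  by move=> r x y [u1 s1] [u2 s2]; split; [apply: (hsub n).2 | apply: rspanP].
have hVd : forall n x, V n.+1 x -> V n x.
  by move=> n x [h1 h2]; split => //; apply: hdec.
have [N2 hN2] := IH V hV hVd (fun n x h => h.2).
exists (maxn N1 N2) => n hn x; split; first by apply: chain_le.
move=> hx.
have hn1 : (N1 <= n)%N by apply: leq_trans hn; apply: leq_maxl.
have hn2 : (N2 <= n)%N by apply: leq_trans hn; apply: leq_maxr.
have [r [y [sy ex]]] := (rspan_cons a s x).1 (hsp _ _ hx).
have Ir : I (maxn N1 N2) r by exists y; rewrite -ex.
have : I n r.
  apply/(hN1 n hn1); apply/(hN1 (maxn N1 N2) (leq_maxl _ _)); exact: Ir.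
move=> [y' [sy' u']].
have ud : U (maxn N1 N2) (y - y').
  have -> : y - y' = x - (phi r *: a + y') by rewrite ex opprD addrACA subrr add0r.
  apply: RsubB => //; exact: chain_le hn u'.
have vd : V n (y - y').
  apply/(hN2 n hn2); apply/(hN2 (maxn N1 N2) (leq_maxr _ _)); split => //; exact: rspanB.
have -> : x = (phi r *: a + y') + (y - y') by rewrite ex -addrA [y' + _]addrC subrK.
exact: RsubD (hsub n) u' vd.1.
Qed.
End Span.
Section Iter.
Variables (L : pzRingType) (M : lmodType L) (ph : {linear M -> M}).
Lemma iterP m a x y : iter m ph (a *: x + y) = a *: iter m ph x + iter m ph y.
Proof. by elim: m => //= m ->; rewrite linearP. Qed.
Lemma iter0 m : iter m ph 0 = 0.
Proof. by elim: m => //= m ->; rewrite linear0. Qed.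
Lemma iter_add m x y : iter m ph (x + y) = iter m ph x + iter m ph y.
Proof. by have := iterP m 1 x y; rewrite !scale1r. Qed.
Lemma iterZ m a x : iter m ph (a *: x) = a *: iter m ph x.
Proof. by have := iterP m a x 0; rewrite !addr0 iter0 addr0. Qed.
Lemma iterN m x : iter m ph (- x) = - iter m ph x.
Proof. by have := iterZ m (-1) x; rewrite !scaleN1r. Qed.
Lemma iter_sum m I (r : seq I) (P : pred I) (F : I -> M) :
  iter m ph (\sum_(i <- r | P i) F i) = \sum_(i <- r | P i) iter m ph (F i).
Proof.
elim/big_rec2: _ => [|i y1 y2 _ <-]; first exact: iter0.
exact: iter_add.
Qed.
End Iter.

Section Vasc.
Variables (L : pzRingType) (R : comNzRingType) (phi : {rmorphism R -> L}) (M : lmodType L).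
Variables (ph : {linear M -> M}) (n : nat) (w0 : 'I_n.+1 -> M) (C : 'M[R]_n.+1).
Hypothesis hC : forall l, w0 l = ph (\sum_j phi (C l j) *: w0 j).

Definition act (D : 'M[R]_n.+1) (w : 'I_n.+1 -> M) : 'I_n.+1 -> M :=
  fun i => \sum_j phi (D i j) *: w j.

Lemma act_ext D w w' i : (forall j, w j = w' j) -> act D w i = act D w' i.
Proof. by move=> h; apply: eq_bigr => j _; rewrite h. Qed.

Lemma act_mul D1 D2 w i : act (D1 *m D2) w i = act D1 (act D2 w) i.
Proof.
rewrite /act; under eq_bigr do rewrite mxE rmorph_sum scaler_suml.
rewrite exchange_big /=; apply: eq_bigr => k _; rewrite scaler_sumr.
by apply: eq_bigr => j _; rewrite rmorphM scalerA.
Qed.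

Lemma act1 w i : act 1%:M w i = w i.
Proof.
rewrite /act (bigD1 i) //= mxE eqxx rmorph1 scale1r big1 ?addr0 // => j hj.
by rewrite mxE eq_sym (negbTE hj) rmorph0 scale0r.
Qed.

Lemma act_sum I (r : seq I) (P : pred I) (F : I -> 'M[R]_n.+1) w i :
  act (\sum_(k <- r | P k) F k) w i = \sum_(k <- r | P k) act (F k) w i.
Proof.
rewrite /act exchange_big /=; apply: eq_bigr => j _.
by rewrite summxE rmorph_sum scaler_suml.
Qed.

Lemma actZ a D w i : act (a *: D) w i = phi a *: act D w i.
Proof.
rewrite /act scaler_sumr; apply: eq_bigr => j _.
by rewrite mxE rmorphM scalerA.
Qed.

Lemma act0 w i : act 0 w i = 0.
Proof. by rewrite /act big1 // => j _; rewrite mxE rmorph0 scale0r. Qed.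

Lemma act_iter m D w i : act D (fun l => iter m ph (w l)) i = iter m ph (act D w i).
Proof. by rewrite /act iter_sum; apply: eq_bigr => j _; rewrite iterZ. Qed.

Definition fw m l := iter m ph (w0 l).

Lemma actC m l : act C (fw m.+1) l = fw m l.
Proof.
rewrite /fw; under [act _ _ _]eq_bigr do rewrite iterSr.
have := act_iter m C (fun l => ph (w0 l)) l; rewrite /act => ->.
congr (iter m ph _); rewrite hC linear_sum; apply: eq_bigr => j _.
by rewrite linearZ.
Qed.

Lemma actCX i m l : act (C ^+ i) (fw (i + m)) l = fw m l.
Proof.
elim: i m l => [|i IH] m l; first by rewrite expr0 add0n act1.
rewrite exprS /GRing.mul /= act_mul -(actC m l).
by apply: act_ext => j; rewrite addSnnS IH.
Qed.

End Vasc.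

Section Vasc2.
Variables (L : pzRingType) (R : comNzRingType) (phi : {rmorphism R -> L}) (M : lmodType L).
Variables (ph : {linear M -> M}) (n : nat) (w0 : 'I_n.+1 -> M) (C : 'M[R]_n.+1).
Hypothesis hC : forall l, w0 l = ph (\sum_j phi (C l j) *: w0 j).

Lemma horner_mx_exp (p : {poly R}) :
  horner_mx C p = \sum_(i < size p) p`_i *: C ^+ i.
Proof.
rewrite -{1}[p]coefK poly_def rmorph_sum; apply: eq_bigr => i _.
by rewrite -mul_polyC rmorphM /= horner_mx_C rmorphXn /= horner_mx_X [_ * _]mul_scalar_mx.
Qed.

Definition Qop (y : M) := \sum_(i < n.+2) phi ((char_poly C)`_i) *: iter (n.+1 - i) ph y.

Lemma Qop_w0 l : Qop (w0 l) = 0.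
Proof.
have := act0 phi (fw ph w0 n.+1) l.
rewrite -(Cayley_Hamilton C) horner_mx_exp size_char_poly act_sum => <-.
apply: eq_bigr => i _; rewrite actZ; congr (_ *: _).
have hi : (i <= n.+1)%N by rewrite -ltnS.
have := @actCX _ _ phi _ ph _ w0 C hC i (n.+1 - i) l; rewrite subnKC // => ->.
Qed.

Lemma QopP r y z : Qop (phi r *: y + z) = phi r *: Qop y + Qop z.
Proof.
rewrite /Qop scaler_sumr -big_split; apply: eq_bigr => i _ /=.
rewrite iterP scalerDr !scalerA -!rmorphM mulrC //.
Qed.

Lemma Qop_sum (r : 'I_n.+1 -> R) : Qop (\sum_l phi (r l) *: w0 l) = 0.
Proof.
elim/big_rec: _ => [|l y _ IH].
  by rewrite /Qop big1 // => i _; rewrite iter0 scaler0.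
by have := QopP (r l) (w0 l) y; rewrite Qop_w0 IH scaler0 addr0.
Qed.

Lemma vasc_core (r : 'I_n.+1 -> R) : ph (\sum_l phi (r l) *: w0 l) = 0 ->
  \sum_l phi (r l) *: w0 l = 0.
Proof.
set y := \sum_l _ => hy.
have := Qop_sum r; rewrite -/y /Qop big_ord_recr /= subnn /=.
have := char_poly_monic C; rewrite monicE lead_coefE size_char_poly => /eqP ->.
rewrite rmorph1 scale1r big1 ?add0r // => i _.
have hi : (n.+1 - i)%N = (n - i).+1 by rewrite subSn // -ltnS.
by rewrite hi iterSr hy iter0 scaler0.
Qed.
End Vasc2.

Lemma bij_of_inj_surj (T : Type) (f : T -> T) : injective f -> (forall y, exists x, f x = y) -> bijective f.
Proof.
move=> hi hs; pose g y := proj1_sig (constructive_indefinite_description _ (hs y)).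
have hg : forall y, f (g y) = y by move=> y; rewrite /g; case: constructive_indefinite_description.
by exists g => [x|y]; [apply: hi; rewrite hg | exact: hg].
Qed.

Section Fitting.
Variables (L : pzRingType) (R : comNzRingType) (phi : {rmorphism R -> L}) (M : lmodType L).
Hypothesis art : artinian_ring R.
Variables (G : seq M) (hG : forall x, rspan phi G x).
Hypothesis ind : indecomposable M.
Variable ph : {linear M -> M}.

Lemma fitting : bijective ph \/ bijective (fun x => x - ph x).
Proof.
pose U n x := exists y, x = iter n ph y.
have hUs : forall n, Rsub phi (U n).
  move=> n; split; first by exists 0; rewrite iter0.
  by move=> r x y [x1 ->] [y1 ->]; exists (phi r *: x1 + y1); rewrite iterP.
have hUd : forall n x, U n.+1 x -> U n x.
  by move=> n x [y ->]; exists (ph y); rewrite iterSr.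
have [N hN] := dcc_span art hUs hUd (fun n x _ => hG x).
have UNph : forall x, U N x -> U N (ph x).
  by move=> x [y ->]; exists (ph y); rewrite -iterS iterSr.
pose W := map (iter N ph) G.
have hW : forall x, U N x <-> rspan phi W x.
  move=> x; split.
    move=> [y ->]; have [c ->] := hG y; exists c; rewrite iter_sum size_map.
    apply: eq_bigr => i _; rewrite iterZ (nth_map 0) //.
  move=> [c ->]; exists (\sum_(i < size G) phi (c i) *: G`_i); rewrite iter_sum.
  rewrite size_map; apply: eq_bigr => i _; rewrite iterZ (nth_map 0) //.
have injU : forall x, U N x -> ph x = 0 -> x = 0.
  move=> x /hW [c ->]; case hk : (size W) => [|k].
    by rewrite big_ord0.
  have H : forall l : 'I_k.+1, exists c : nat -> R,
      W`_l = ph (\sum_(j < k.+1) phi (c j) *: W`_j).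
    move=> l; have hl : (l < size W)%N by rewrite hk.
    have : U N.+1 W`_l by apply/(hN N.+1 (leqnSn N)); apply/hW; apply: rspan_mem.
    move=> [y ey]; have : U N (iter N ph y) by exists y.
    move/hW => [d ed]; exists d; rewrite ey iterS ed hk //.
  pose cf l := proj1_sig (constructive_indefinite_description _ (H l)).
  have hcf : forall l : 'I_k.+1, W`_l = ph (\sum_(j < k.+1) phi (cf l j) *: W`_j).
    by move=> l; rewrite /cf; case: constructive_indefinite_description.
  pose C : 'M[R]_k.+1 := \matrix_(l < k.+1, j < k.+1) cf l j.
  have hC : forall l : 'I_k.+1, W`_l = ph (\sum_j phi (C l j) *: W`_j).
    by move=> l; rewrite hcf; congr (ph _); apply: eq_bigr => j _; rewrite mxE.
  exact: (@vasc_core _ _ phi _ ph k (fun l => W`_l) C hC (fun j => c j)).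
have zero_iter : forall m x, U N x -> iter m ph x = 0 -> x = 0.
  elim=> [|m IH] x ux; first by [].
  rewrite iterSr => h.
  apply: (injU x ux); exact: (IH (ph x) (UNph x ux) h).
have dec : forall x, exists u v, iter N ph u = 0 /\ U N v /\ x = u + v.
  move=> x; have : U (N + N) (iter N ph x).
    by apply/(hN _ (leq_addr _ _)); exists x.
  move=> [z ez]; exists (x - iter N ph z), (iter N ph z); split; last split.
  - by rewrite iter_add iterN ez iterD subrr.
  - by exists z.
  - by rewrite subrK.
have := ind.2 (fun x => iter N ph x = 0) (U N).
case.
- split; first exact: iter0.
  by move=> a x y hx hy; rewrite iterP hx hy scaler0 addr0.
- split; first by exists 0; rewrite iter0.
  by move=> a x y [x1 ->] [y1 ->]; exists (a *: x1 + y1); rewrite iterP.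
- by move=> x hx ux; apply: zero_iter ux hx.
- exact: dec.
- move=> hK; left.
  have allU : forall x, U N x.
    by move=> x; have [u [v [hu [hv ->]]]] := dec x; rewrite (hK u hu) add0r.
  apply: bij_of_inj_surj.
    move=> x y e; apply/eqP; rewrite -subr_eq0; apply/eqP.
    by apply: injU (allU _) _; rewrite linearB e subrr.
  move=> y; have : U N.+1 y by apply/(hN _ (leqnSn N)).
  by move=> [z ->]; exists (iter N ph z).
- move=> hV; right.
  have hz : forall x, iter N ph x = 0 by move=> x; apply: hV; exists x.
  pose S x := \sum_(i < N) iter i ph x.
  have S1 : forall m x, \sum_(i < m) iter i ph (x - ph x) = x - iter m ph x.
    move=> m x; elim: m => [|m IH]; first by rewrite big_ord0 subrr.
    by rewrite big_ord_recr /= IH iter_add iterN -iterSr addrA subrK.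
  have S2 : forall m x, \sum_(i < m) iter i ph x - ph (\sum_(i < m) iter i ph x) = x - iter m ph x.
    move=> m x; elim: m => [|m IH]; first by rewrite big_ord0 linear0 !subrr.
    rewrite big_ord_recr /= linearD opprD addrACA IH -iterS.
    by rewrite addrA subrK.
  exists S => x; rewrite /S.
    by rewrite S1 hz subr0.
  by rewrite S2 hz subr0.
Qed.
End Fitting.
Section Transport.
Variables (R : comPzRingType) (hR : (1 != 0 :> R)).
Definition Rnz : Type := R.
HB.instance Definition _ := GRing.ComPzRing.on Rnz.
HB.instance Definition _ := GRing.PzSemiRing_isNonZero.Build Rnz hR.
Lemma fitting_pz (L : pzRingType) (phi : {rmorphism R -> L}) (art : artinian_ring R)
  (M : lmodType L) (G : seq M) (hG : forall x, rspan phi G x) (ind : indecomposable M)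
  (ph : {linear M -> M}) : bijective ph \/ bijective (fun x => x - ph x).
Proof.
exact: (@fitting L Rnz (phi : {rmorphism Rnz -> L}) M art G hG ind ph).
Qed.
End Transport.

Lemma rspan_sum (L : pzRingType) (R : comPzRingType) (phi : {rmorphism R -> L}) (M : lmodType L)
  (G : seq M) I (r : seq I) (P : pred I) (F : I -> M) :
  (forall i, P i -> rspan phi G (F i)) -> rspan phi G (\sum_(i <- r | P i) F i).
Proof.
move=> h; elim/big_rec: _ => [|i y Pi IH]; first exact: rspan0.
by apply: rspanD => //; apply: h.
Qed.

Lemma rspan_in (L : pzRingType) (R : comPzRingType) (phi : {rmorphism R -> L}) (M : lmodType L)
  (G : seq M) y : y \in G -> rspan phi G y.
Proof. by move=> hy; rewrite -(nth_index 0 hy); apply: rspan_mem; rewrite index_mem. Qed.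

Lemma local_end (L : pzRingType) (M : lmodType L) : artin_algebra L -> fin_gen M ->
  indecomposable M -> forall ph : {linear M -> M},
  bijective ph \/ bijective (fun x => x - ph x).
Proof.
move=> [R [phi [art [_ [m [t ht]]]]]] [n [s hs]] ind ph.
pose G := [seq t j *: s i | i <- enum 'I_n, j <- enum 'I_m].
have hG : forall x, rspan phi G x.
  move=> x; have [c ->] := hs x; apply: rspan_sum => i _.
  have [d ->] := ht (c i); rewrite scaler_suml; apply: rspan_sum => j _.
  rewrite -scalerA; apply: rspanZ; apply: rspan_in.
  by apply: allpairs_f; rewrite mem_enum.
have [h1|hR] := eqVneq (1 : R) 0.
  exfalso; have [x /eqP []] := ind.1.
  by rewrite -[x]scale1r -(rmorph1 phi) h1 rmorph0 scale0r.
exact: (fitting_pz hR art hG ind ph).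
Qed.

Lemma bij_comp (T : Type) (h v : T -> T) :
  bijective (fun x => h (v x)) -> bijective (fun x => v (h x)) -> bijective h.
Proof.
move=> [w hw1 hw2] [u hu1 hu2]; apply: bij_of_inj_surj.
  by move=> x y e; rewrite -(hu1 x) -(hu1 y) /= e.
by move=> y; exists (v (w y)); exact: hw2.
Qed.

Lemma lin_inv (L : pzRingType) (M N : lmodType L) (f : {linear M -> N}) :
  bijective f -> exists g : {linear N -> M}, cancel f g /\ cancel g f.
Proof.
move=> [g0 h1 h2].
have H : forall a x y, g0 (a *: x + y) = a *: g0 x + g0 y.
  move=> a x y; apply: (can_inj h1); by rewrite h2 linearP !h2.
by exists (mk_lin H).
Qed.

Section SubmoduleFacts.
Variables (L : pzRingType) (M : lmodType L) (U : M -> Prop) (hU : submodule U).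
Lemma smD x y : U x -> U y -> U (x + y).
Proof. by move=> hx hy; have := hU.2 1 _ _ hx hy; rewrite scale1r. Qed.
Lemma smZ a x : U x -> U (a *: x).
Proof. by move=> hx; have := hU.2 a _ _ hx hU.1; rewrite addr0. Qed.
Lemma smN x : U x -> U (- x).
Proof. by move=> hx; have := smZ (-1) hx; rewrite scaleN1r. Qed.
Lemma smB x y : U x -> U y -> U (x - y).
Proof. by move=> hx hy; apply: smD => //; apply: smN. Qed.
End SubmoduleFacts.

Lemma proj_lin (L : pzRingType) (M : lmodType L) (U V : M -> Prop) :
  submodule U -> submodule V -> (forall x, U x -> V x -> x = 0) ->
  (forall x, exists u v, U u /\ V v /\ x = u + v) ->
  exists p : {linear M -> M}, forall x, U (p x) /\ V (x - p x).
Proof.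
move=> hU hV dis sp.
have sp' : forall x, exists u, U u /\ V (x - u).
  by move=> x; have [u [v [hu [hv ->]]]] := sp x; exists u; rewrite addrC addKr.
pose p0 x := proj1_sig (constructive_indefinite_description _ (sp' x)).
have hp : forall x, U (p0 x) /\ V (x - p0 x).
  by move=> x; rewrite /p0; case: constructive_indefinite_description.
have H : forall a x y, p0 (a *: x + y) = a *: p0 x + p0 y.
  move=> a x y; apply/eqP; rewrite -subr_eq0; apply/eqP; apply: dis.
    by apply: smB => //; [exact: (hp _).1 | apply: smD => //; [apply: smZ => //; exact: (hp _).1 | exact: (hp _).1]].
  have -> : p0 (a *: x + y) - (a *: p0 x + p0 y) =
     (a *: (x - p0 x) + (y - p0 y)) - (a *: x + y - p0 (a *: x + y)).
    by rewrite scalerBr addrACA -opprD opprB [RHS]addrC addrA subrK.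
  apply: smB => //; last exact: (hp _).2.
  apply: smD => //; [apply: smZ => //; exact: (hp _).2 | exact: (hp _).2].
by exists (mk_lin H).
Qed.

Section Main.
Variables (L : pzRingType) (A B C : lmodType L) (g : {linear A -> B}) (f : {linear B -> C}).
Hypotheses (art : artin_algebra L) (fA : fin_gen A) (fB : fin_gen B) (fC : fin_gen C).
Hypotheses (ex : short_exact g f) (ns : ~ splits g f).
Hypotheses (PB : projective_mod B) (IB : injective_mod B).

Lemma fg0 x : f (g x) = 0.
Proof. by apply/(ex.2.2 (g x)).2; exists x. Qed.

Lemma ext_g (ph : {linear A -> A}) : exists e : {linear B -> B}, forall x, e (g x) = g (ph x).
Proof.
have H : forall a x y, g (ph (a *: x + y)) = a *: g (ph x) + g (ph y) by move=> *; rewrite !linearP.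
exact: (@IB _ _ fA fB g (@mk_lin _ _ _ (fun x => g (ph x)) H) ex.1).
Qed.

Lemma lift_f (ps : {linear C -> C}) : exists e : {linear B -> B}, forall x, f (e x) = ps (f x).
Proof.
have H : forall a x y, ps (f (a *: x + y)) = a *: ps (f x) + ps (f y) by move=> *; rewrite !linearP.
exact: (@PB _ _ fB fC f (@mk_lin _ _ _ (fun x => ps (f x)) H) ex.2.1).
Qed.

Lemma fac_g (X : lmodType L) (u : {linear X -> B}) : (forall x, f (u x) = 0) ->
  exists k : {linear X -> A}, forall x, g (k x) = u x.
Proof.
move=> hu.
pose k0 x := proj1_sig (constructive_indefinite_description _ ((ex.2.2 (u x)).1 (hu x))).
have hk : forall x, g (k0 x) = u x.
  by move=> x; rewrite /k0; case: constructive_indefinite_description.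
have H : forall a x y, k0 (a *: x + y) = a *: k0 x + k0 y.
  by move=> a x y; apply: ex.1; rewrite linearP !hk linearP.
by exists (mk_lin H).
Qed.

Lemma fac_f (Y : lmodType L) (u : {linear B -> Y}) : (forall x, u (g x) = 0) ->
  exists k : {linear C -> Y}, forall b, k (f b) = u b.
Proof.
move=> hu.
pose sc c := proj1_sig (constructive_indefinite_description _ (ex.2.1 c)).
have hs : forall c, f (sc c) = c.
  by move=> c; rewrite /sc; case: constructive_indefinite_description.
have wd : forall b b', f b = f b' -> u b = u b'.
  move=> b b' e; have : f (b - b') = 0 by rewrite linearB e subrr.
  move/(ex.2.2 _).1 => [x hx]; apply/eqP; rewrite -subr_eq0 -linearB -hx hu //.
have H : forall a x y, u (sc (a *: x + y)) = a *: u (sc x) + u (sc y).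
  by move=> a x y; rewrite -linearP; apply: wd; rewrite linearP !hs.
exists (@mk_lin _ _ _ (fun c => u (sc c)) H) => b /=; apply: wd; exact: hs.
Qed.

Lemma e_bij_A (gmin : left_minimal g) (e : {linear B -> B}) (ph ps : {linear A -> A}) :
  (forall a, e (g a) = g (ph a)) -> cancel ph ps -> cancel ps ph -> bijective e.
Proof.
move=> he c1 c2; have [v hv] := ext_g ps.
have H1 : forall a x y, e (v (a *: x + y)) = a *: e (v x) + e (v y) by move=> *; rewrite !linearP.
have H2 : forall a x y, v (e (a *: x + y)) = a *: v (e x) + v (e y) by move=> *; rewrite !linearP.
apply: (bij_comp (v := v)).
  by apply: (gmin (@mk_lin _ _ _ (fun x => e (v x)) H1)) => x /=; rewrite hv he c2.
by apply: (gmin (@mk_lin _ _ _ (fun x => v (e x)) H2)) => x /=; rewrite he hv c1.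
Qed.

Lemma e_bij_C (fmin : right_minimal f) (e : {linear B -> B}) (ph ps : {linear C -> C}) :
  (forall b, f (e b) = ph (f b)) -> cancel ph ps -> cancel ps ph -> bijective e.
Proof.
move=> he c1 c2; have [v hv] := lift_f ps.
have H1 : forall a x y, e (v (a *: x + y)) = a *: e (v x) + e (v y) by move=> *; rewrite !linearP.
have H2 : forall a x y, v (e (a *: x + y)) = a *: v (e x) + v (e y) by move=> *; rewrite !linearP.
apply: (bij_comp (v := v)).
  by apply: (fmin (@mk_lin _ _ _ (fun x => e (v x)) H1)) => x /=; rewrite he hv c2.
by apply: (fmin (@mk_lin _ _ _ (fun x => v (e x)) H2)) => x /=; rewrite hv he c1.
Qed.

Lemma nonzero_of (M : lmodType L) : ~ (forall x : M, x = 0) -> exists x : M, x != 0.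
Proof.
move=> h; apply: NNPP => hn; apply: h => x; apply: NNPP => hx.
by apply: hn; exists x; apply/eqP.
Qed.

Lemma dir12_rmin : indecomposable A -> left_minimal g -> right_minimal f.
Proof.
move=> indA gmin h hh.
have H0 : forall a x y, h (a *: x + y) - (a *: x + y) = a *: (h x - x) + (h y - y).
  by move=> a x y; rewrite linearP scalerBr opprD addrACA.
have hu : forall x, f (h x - x) = 0 by move=> x; rewrite linearB hh subrr.
have [k hk] := fac_g (u := @mk_lin _ _ _ (fun x => h x - x) H0) hu.
have H1 : forall a x y, - k (g (a *: x + y)) = a *: (- k (g x)) + - k (g y).
  by move=> a x y; rewrite !linearP.
have [bij|bij] := local_end art fA indA (@mk_lin _ _ _ (fun x => - k (g x)) H1).
  exfalso; apply: ns; have [ps [c1 c2]] := lin_inv bij.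
  have H2 : forall a x y, ps (- k (a *: x + y)) = a *: ps (- k x) + ps (- k y).
    by move=> a x y; rewrite -linearP linearP opprD scalerN.
  by exists (@mk_lin _ _ _ (fun b => ps (- k b)) H2) => x; exact: c1.
have H3 : forall a x y, (a *: x + y) - (- k (g (a *: x + y))) = a *: (x - - k (g x)) + (y - - k (g y)).
  by move=> a x y; rewrite !opprK !linearP scalerDr addrACA.
have [ps [c1 c2]] := lin_inv (f := @mk_lin _ _ _ (fun x => x - - k (g x)) H3) bij.
apply: (e_bij_A gmin (ph := @mk_lin _ _ _ (fun x => x - - k (g x)) H3) _ c1 c2) => a /=.
by rewrite opprK linearD hk addrC subrK.
Qed.

Lemma dir12_ind : indecomposable A -> left_minimal g -> indecomposable C.
Proof.
move=> indA gmin; split.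
  apply: nonzero_of => h0; apply: ns.
  have H0 : forall a (x y : B), a *: x + y = a *: x + y by [].
  have [r hr] := fac_g (u := @mk_lin _ _ _ (fun x => x) H0) (fun x => h0 _).
  by exists r => x; apply: ex.1; rewrite hr.
move=> U V hU hV dis sp.
have [p hp] := proj_lin hU hV dis sp.
have [e he] := lift_f p.
have hu : forall a, f (e (g a)) = 0 by move=> a; rewrite he fg0 linear0.
have H0 : forall a x y, e (g (a *: x + y)) = a *: e (g x) + e (g y) by move=> *; rewrite !linearP.
have [ph hph] := fac_g (u := @mk_lin _ _ _ (fun a => e (g a)) H0) hu.
have [bij|bij] := local_end art fA indA ph.
  right; have [ps [c1 c2]] := lin_inv bij.
  have [ei _ c3] := e_bij_A gmin (e := e) (fun a => esym (hph a)) c1 c2.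
  have allU : forall c, U c.
    move=> c; have [b <-] := ex.2.1 c; rewrite -[b]c3 he; exact: (hp _).1.
  by move=> x vx; apply: dis => //; apply: allU.
left.
have H1 : forall a x y, (a *: x + y) - ph (a *: x + y) = a *: (x - ph x) + (y - ph y).
  by move=> a x y; rewrite linearP scalerBr opprD addrACA.
have H2 : forall a x y, (a *: x + y) - e (a *: x + y) = a *: (x - e x) + (y - e y).
  by move=> a x y; rewrite linearP scalerBr opprD addrACA.
have [ps [c1 c2]] := lin_inv (f := @mk_lin _ _ _ (fun x => x - ph x) H1) bij.
have he1 : forall a, (@mk_lin _ _ _ (fun x => x - e x) H2) (g a) =
   g ((@mk_lin _ _ _ (fun x => x - ph x) H1) a).
  by move=> a /=; rewrite linearB hph.
have [ei _ c3] := e_bij_A gmin he1 c1 c2.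
have allV : forall c, V c.
  move=> c; have [b <-] := ex.2.1 c; rewrite -[b]c3 /= linearB he; exact: (hp _).2.
by move=> x ux; apply: dis => //; apply: allV.
Qed.

Lemma dir21_lmin : indecomposable C -> right_minimal f -> left_minimal g.
Proof.
move=> indC fmin h hh.
have H0 : forall a x y, h (a *: x + y) - (a *: x + y) = a *: (h x - x) + (h y - y).
  by move=> a x y; rewrite linearP scalerBr opprD addrACA.
have hu : forall x, h (g x) - g x = 0 by move=> x; rewrite hh subrr.
have [k hk] := fac_f (u := @mk_lin _ _ _ (fun x => h x - x) H0) hu.
have H1 : forall a x y, - f (k (a *: x + y)) = a *: (- f (k x)) + - f (k y).
  by move=> a x y; rewrite !linearP.
have [bij|bij] := local_end art fC indC (@mk_lin _ _ _ (fun x => - f (k x)) H1).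
  exfalso; apply: ns; have [ps [c1 c2]] := lin_inv bij.
  have H2 : forall a x y, - k (ps (a *: x + y)) = a *: (- k (ps x)) + - k (ps y).
    by move=> a x y; rewrite !linearP.
  have hs : forall c, f (- k (ps c)) = c by move=> c; rewrite linearN; exact: c2.
  have H3 : forall a x y, (a *: x + y) - (- k (ps (f (a *: x + y))))
      = a *: (x - - k (ps (f x))) + (y - - k (ps (f y))).
    by move=> a x y; rewrite !opprK !linearP scalerDr addrACA.
  have hv : forall b, f (b - - k (ps (f b))) = 0 by move=> b; rewrite linearB hs subrr.
  have [r hr] := fac_g (u := @mk_lin _ _ _ (fun b => b - - k (ps (f b))) H3) hv.
  exists r => x; apply: ex.1; rewrite hr /= fg0 !linear0 ?oppr0 ?subr0 ?addr0 //.
have H3 : forall a x y, (a *: x + y) - (- f (k (a *: x + y))) = a *: (x - - f (k x)) + (y - - f (k y)).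
  by move=> a x y; rewrite !opprK !linearP scalerDr addrACA.
have [ps [c1 c2]] := lin_inv (f := @mk_lin _ _ _ (fun x => x - - f (k x)) H3) bij.
apply: (e_bij_C fmin (ph := @mk_lin _ _ _ (fun x => x - - f (k x)) H3) _ c1 c2) => b /=.
by rewrite opprK hk linearB addrC subrK.
Qed.

Lemma dir21_ind : indecomposable C -> right_minimal f -> indecomposable A.
Proof.
move=> indC fmin; split.
  apply: nonzero_of => h0; apply: ns.
  have H0 : forall a (x y : B), (0 : A) = a *: 0 + 0 by move=> *; rewrite scaler0 addr0.
  by exists (@mk_lin _ _ _ (fun _ => 0) H0) => x; rewrite (h0 x).
move=> U V hU hV dis sp.
have [p hp] := proj_lin hU hV dis sp.
have pV : forall x, V x -> p x = 0.
  move=> x vx; apply: dis; first exact: (hp x).1.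
  have -> : p x = x - (x - p x) by rewrite opprB addrC subrK.
  by apply: smB => //; exact: (hp x).2.
have pU : forall x, U x -> x - p x = 0.
  move=> x ux; apply: dis; last exact: (hp x).2.
  by apply: smB => //; exact: (hp x).1.
have [e he] := ext_g p.
have H0 : forall a x y, f (e (a *: x + y)) = a *: f (e x) + f (e y) by move=> *; rewrite !linearP.
have hu : forall a, f (e (g a)) = 0 by move=> a; rewrite he fg0.
have [ph hph] := fac_f (u := @mk_lin _ _ _ (fun b => f (e b)) H0) hu.
have [bij|bij] := local_end art fC indC ph.
  right; have [ps [c1 c2]] := lin_inv bij.
  have [ei c3 _] := e_bij_C fmin (e := e) (fun b => esym (hph b)) c1 c2.
  move=> x vx; apply: ex.1; rewrite linear0.
  by rewrite -[g x]c3 he pV // linear0 -{1}(linear0 e) c3.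
left.
have H1 : forall a x y, (a *: x + y) - ph (a *: x + y) = a *: (x - ph x) + (y - ph y).
  by move=> a x y; rewrite linearP scalerBr opprD addrACA.
have H2 : forall a x y, (a *: x + y) - e (a *: x + y) = a *: (x - e x) + (y - e y).
  by move=> a x y; rewrite linearP scalerBr opprD addrACA.
have [ps [c1 c2]] := lin_inv (f := @mk_lin _ _ _ (fun x => x - ph x) H1) bij.
have he1 : forall b, f ((@mk_lin _ _ _ (fun x => x - e x) H2) b) =
   (@mk_lin _ _ _ (fun x => x - ph x) H1) (f b).
  by move=> b /=; rewrite linearB hph.
have [ei c3 _] := e_bij_C fmin he1 c1 c2.
move=> x ux; apply: ex.1; rewrite linear0.
by rewrite -[g x]c3 /= he -linearB pU // linear0 -{1}(linear0 (@mk_lin _ _ _ (fun x => x - e x) H2)) c3.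
Qed.

End Main.

Theorem lemma2p6 (L : pzRingType) (A B C : lmodType L)
  (g : {linear A -> B}) (f : {linear B -> C}) :
  artin_algebra L ->
  fin_gen A -> fin_gen B -> fin_gen C ->
  short_exact g f -> ~ splits g f ->
  projective_mod B -> injective_mod B ->
  (indecomposable A /\ left_minimal g <-> indecomposable C /\ right_minimal f).
Proof.
move=> art fA fB fC ex ns PB IB; split => [[iA gm]|[iC fm]]; split.
- exact: (dir12_ind art fA fB fC ex ns PB IB iA gm).
- exact: (dir12_rmin art fA fB ex ns IB iA gm).
- exact: (dir21_ind art fA fB fC ex ns PB IB iC fm).
- exact: (dir21_lmin art fB fC ex ns PB iC fm).
Qed.
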